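(* Let $A \in \mathbb{R}^{n\times d}$, $b \in \mathbb{R}^n$. Let $w$ be a random variable in $\mathbb{R}^n$ and let $\mathcal{N}(w) = \mathrm{span}\lbrace z \in \mathbb{R}^d : \mathbb{P}[z'A'w = 0]=1\rbrace$, $\mathcal{R}(w) = \mathcal{N}(w)^\perp$. Let $w_0, w_1, \ldots$ be random variables in $\mathbb{R}^n$ (on the same probability space) with $\mathbb{P}[A'w_l \in \mathcal{R}(w)] = 1$ for all $l \geq 0$, and let $T = \min\lbrace k \geq 0 : \mathrm{span}\lbrace A'w_0,\ldots,A'w_k\rbrace \supset \mathcal{R}(w)\rbrace$. Let $x_0 \in \mathbb{R}^d$ be arbitrary, $S_0 = I_d$, and for $l \geq 0$ $$x_{l+1} = \begin{cases} x_l + \dfrac{S_l A' w_l w_l'(b - A x_l)}{w_l' A S_l A' w_l} & S_l A'w_l \neq 0,\\ x_l & \text{otherwise,}\end{cases}\qquad S_{l+1} = \begin{cases} S_l - \dfrac{S_l A' w_l w_l' A S_l}{w_l' A S_l A' w_l} & S_l A' w_l \neq 0,\\ S_l & \text{otherwise.}\end{cases}$$ Then, almost surely on the event $\lbrace T < \infty\rbrace$: (1) for every $s \geq T+1$, $S_{T+1} = S_s$ and $x_{T+1} = x_s$; (2) if $Ax = b$ admits a solution $x^*$ (not necessarily unique), then $x_{T+1} = P_{\mathcal{N}(w)} x_0 + P_{\mathcal{R}(w)} x^*$.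
   Context: $P_W$ denotes the orthogonal projection matrix onto a subspace $W \subset \mathbb{R}^d$; $A'$ is the transpose of $A$. *)

(* Defs.v *)
From HB Require Import structures.
From mathcomp Require Import all_boot all_order all_algebra.
From mathcomp Require Import all_classical all_reals.
From mathcomp Require Import measure lebesgue_measure probability.
Set Implicit Arguments. Unset Strict Implicit. Unset Printing Implicit Defensive.
Import Order.TTheory GRing.Theory Num.Theory.
Local Open Scope ring_scope.
Local Open Scope classical_set_scope.

Section Defs.
Variable R : realType.

Definition dotv (d : nat) (u v : 'cV[R]_d) : R := (u^T *m v) 0 0.

Definition span_set (d : nat) (S : set 'cV[R]_d) : set 'cV[R]_d :=
  [set v | exists (k : nat) (c : 'I_k -> R) (z : 'I_k -> 'cV[R]_d),
      (forall i, S (z i)) /\ v = \sum_(i < k) c i *: z i].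

Definition orth_compl (d : nat) (W : set 'cV[R]_d) : set 'cV[R]_d :=
  [set v | forall z, W z -> dotv z v = 0].

Definition orth_proj (d : nat) (W : set 'cV[R]_d) (x : 'cV[R]_d) : 'cV[R]_d :=
  xget 0 [set y | W y /\ orth_compl W (x - y)].

Definition kacz_step (n d : nat) (A : 'M[R]_(n, d)) (b : 'cV[R]_n)
    (w : 'cV[R]_n) (xS : 'cV[R]_d * 'M[R]_d) : 'cV[R]_d * 'M[R]_d :=
  let x := xS.1 in let S := xS.2 in
  let u := S *m A^T *m w in
  if u == 0 then (x, S)
  else let den := (w^T *m A *m S *m A^T *m w) 0 0 in
       (x + den^-1 *: (u *m (w^T *m (b - A *m x))),
        S - den^-1 *: (u *m (w^T *m A *m S))).

Fixpoint kacz_iter (n d : nat) (A : 'M[R]_(n, d)) (b : 'cV[R]_n)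
    (x0 : 'cV[R]_d) (ws : nat -> 'cV[R]_n) (l : nat) : 'cV[R]_d * 'M[R]_d :=
  match l with
  | 0 => (x0, 1%:M)
  | l'.+1 => kacz_step A b (ws l') (kacz_iter A b x0 ws l')
  end.
End Defs.

(* Main.v *)
Require Import Defs.
From HB Require Import structures.
From mathcomp Require Import all_boot all_order all_algebra.
From mathcomp Require Import all_classical all_reals.
From mathcomp Require Import measure lebesgue_measure probability.
From mathcomp Require Import zify.
Import Order.TTheory GRing.Theory Num.Theory.
Local Open Scope ring_scope.
Local Open Scope classical_set_scope.
Set Implicit Arguments. Unset Strict Implicit. Unset Printing Implicit Defensive.

Section Aux.
Variable R : realType.
Variable d : nat.
Implicit Types (u v z y : 'cV[R]_d) (W S : set 'cV[R]_d).

Lemma dotvE u v : dotv u v = \sum_i u i 0 * v i 0.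
Proof. by rewrite /dotv mxE; apply: eq_bigr => i _; rewrite mxE. Qed.

Lemma dotvC u v : dotv u v = dotv v u.
Proof. by rewrite !dotvE; apply: eq_bigr => i _; rewrite mulrC. Qed.

Lemma dotvDr z u v : dotv z (u + v) = dotv z u + dotv z v.
Proof. by rewrite !dotvE -big_split; apply: eq_bigr => i _; rewrite mxE mulrDr. Qed.

Lemma dotvZr z a u : dotv z (a *: u) = a * dotv z u.
Proof. by rewrite !dotvE mulr_sumr; apply: eq_bigr => i _; rewrite mxE mulrCA. Qed.

Lemma dotvNr z u : dotv z (- u) = - dotv z u.
Proof. by rewrite -scaleN1r dotvZr mulN1r. Qed.

Lemma dotvBr z u v : dotv z (u - v) = dotv z u - dotv z v.
Proof. by rewrite dotvDr dotvNr. Qed.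

Lemma dotvDl z u v : dotv (u + v) z = dotv u z + dotv v z.
Proof. by rewrite !(dotvC _ z) dotvDr. Qed.

Lemma dotvZl z a u : dotv (a *: u) z = a * dotv u z.
Proof. by rewrite !(dotvC _ z) dotvZr. Qed.

Lemma dotvBl z u v : dotv (u - v) z = dotv u z - dotv v z.
Proof. by rewrite !(dotvC _ z) dotvBr. Qed.

Lemma dotv_ge0 u : 0 <= dotv u u.
Proof. by rewrite dotvE; apply: sumr_ge0 => i _; rewrite -expr2 sqr_ge0. Qed.

Lemma dotv_eq0 u : dotv u u = 0 -> u = 0.
Proof.
rewrite dotvE => /psumr_eq0P H; apply/matrixP => i j.
rewrite (ord1 j) mxE; have := H (fun i _ => ltac:(rewrite -expr2; exact: sqr_ge0)) i isT.
by move/eqP; rewrite mulf_eq0 orbb => /eqP.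
Qed.

Lemma dotv_mx (a : 'cV[R]_d) (y : 'cV[R]_d) (u : 'cV[R]_d) :
  u *m (a^T *m y) = dotv a y *: u.
Proof. by rewrite [a^T *m y]mx11_scalar mul_mx_scalar. Qed.

Definition subsp W := W 0 /\ (forall a u v, W u -> W v -> W (a *: u + v)).

Lemma subspD W u v : subsp W -> W u -> W v -> W (u + v).
Proof. by move=> [_ H] Hu Hv; have := H 1 u v Hu Hv; rewrite scale1r. Qed.
Lemma subspZ W a u : subsp W -> W u -> W (a *: u).
Proof. by move=> [H0 H] Hu; have := H a u 0 Hu H0; rewrite addr0. Qed.
Lemma subspB W u v : subsp W -> W u -> W v -> W (u - v).
Proof. by move=> HW Hu Hv; apply: subspD => //; rewrite -scaleN1r; apply: subspZ. Qed.

Lemma subsp_sum W k (c : 'I_k -> R) (z : 'I_k -> 'cV[R]_d) :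
  subsp W -> (forall i, W (z i)) -> W (\sum_(i < k) c i *: z i).
Proof.
move=> HW; elim: k c z => [|k IH] c z Hz; first by rewrite big_ord0; case: HW.
rewrite big_ord_recr /=; apply: subspD => //; last by apply: subspZ.
by apply: (IH (fun i => c (widen_ord (leqnSn k) i))) => i; apply: Hz.
Qed.

Lemma span_subsp S : subsp (span_set S).
Proof.
split; first by exists 0%N, (fun _ => 0), (fun _ => 0); split => [[]//|]; rewrite big_ord0.
move=> a u v [k1 [c1 [z1 [H1 ->]]]] [k2 [c2 [z2 [H2 ->]]]].
exists (k1 + k2)%N.
exists (fun i => match fintype.split i with inl j => a * c1 j | inr j => c2 j end).
exists (fun i => match fintype.split i with inl j => z1 j | inr j => z2 j end).
split; first by move=> i; case: (fintype.split i).
rewrite big_split_ord /= scaler_sumr; congr (_ + _); apply: eq_bigr => i _.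
  by have /= -> := @unsplitK k1 k2 (inl i); rewrite scalerA.
by have /= -> := @unsplitK k1 k2 (inr i).
Qed.

Lemma span_sub S W : subsp W -> S `<=` W -> span_set S `<=` W.
Proof. by move=> HW SW v [k [c [z [Hz ->]]]]; apply: subsp_sum => // i; apply: SW. Qed.

Lemma sub_span S : S `<=` span_set S.
Proof.
move=> v Sv; exists 1%N, (fun _ => 1), (fun _ => v); split => //.
by rewrite big_ord1 scale1r.
Qed.

Lemma orth_subsp W : subsp (orth_compl W).
Proof.
split; first by move=> z _; rewrite dotvE big1 // => i _; rewrite mxE mulr0.
by move=> a u v Hu Hv z Wz; rewrite dotvDr dotvZr Hu // Hv // mulr0 addr0.
Qed.

Lemma kerdot_subsp y : subsp [set z | dotv z y = 0].
Proof.
split; first by rewrite /= dotvE big1 // => i _; rewrite mxE mul0r.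
by move=> a u v /= Hu Hv; rewrite dotvDl dotvZl Hu Hv mulr0 addr0.
Qed.


Lemma mx11_mulr m (u : 'M[R]_(m,1)) (M : 'M[R]_1) : u *m M = M 0 0 *: u.
Proof. by rewrite {1}[M]mx11_scalar mul_mx_scalar. Qed.

End Aux.

Section Inv.
Variables (R : realType) (n d : nat) (A : 'M[R]_(n, d)) (b : 'cV[R]_n)
  (x0 : 'cV[R]_d) (ws : nat -> 'cV[R]_n) (a : nat -> 'cV[R]_d).
Hypothesis Ha : forall j, A^T *m ws j = a j.

Definition V l := span_set [set v | exists j, (j < l)%N /\ v = a j].

Lemma V_ind W l : subsp W -> V l `<=` W -> W (a l) -> V l.+1 `<=` W.
Proof.
move=> HW Vl Wa; apply: span_sub => // v [j [jl ->]].
move: jl; rewrite ltnS leq_eqVlt => /orP [/eqP -> //| jl].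
by apply: Vl; apply: sub_span; exists j.
Qed.

Lemma V_mono l : V l `<=` V l.+1.
Proof. by apply: span_sub; [exact: span_subsp|move=> v [j [jl ->]]; apply: sub_span; exists j; split => //; apply: ltnW]. Qed.

Lemma V_new l : V l.+1 (a l).
Proof. by apply: sub_span; exists l. Qed.

Definition inv l (xS : 'cV[R]_d * 'M[R]_d) :=
  (forall y, V l (y - xS.2 *m y)) /\ (forall z y, V l z -> dotv z (xS.2 *m y) = 0) /\
  V l (xS.1 - x0) /\
  (forall xs, A *m xs = b -> forall j, (j < l)%N -> dotv (a j) (xs - xS.1) = 0).

Lemma inv_kill l x S z : inv l (x, S) -> V l z -> S *m z = 0.
Proof.
move=> [J1 [J2 _]] Vz; apply: dotv_eq0; apply: J2.
have -> : S *m z = z - (z - S *m z) by rewrite opprB addrC subrK.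
by apply: subspB; [exact: span_subsp|exact: Vz|exact: J1].
Qed.

Lemma inv_sym l x S z y : inv l (x, S) -> dotv z (S *m y) = dotv (S *m z) (S *m y).
Proof.
move=> [J1 [J2 _]].
rewrite {1}(_ : z = (z - S *m z) + S *m z); last by rewrite subrK.
by rewrite dotvDl J2 ?add0r.
Qed.


Lemma inv_step l x S : inv l (x, S) -> inv l.+1 (kacz_step A b (ws l) (x, S)).
Proof.
move=> I; have [J1 [J2 [J3 J4]]] := I.
have Hw : (ws l)^T *m A = (a l)^T by rewrite -Ha trmx_mul trmxK.
have Hu : S *m A^T *m ws l = S *m a l by rewrite -mulmxA Ha.
have Hden : (ws l)^T *m A *m S *m A^T *m ws l = (a l)^T *m (S *m a l).
  by rewrite Hw -!mulmxA Ha.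
rewrite /kacz_step /= Hu Hden.
set u := S *m a l.
have Vu : V l.+1 u.
  rewrite (_ : u = a l - (a l - u)); last by rewrite opprB addrC subrK.
  by apply: subspB; [exact: span_subsp|exact: V_new|exact: V_mono].
have Sa j : (j < l)%N -> dotv (a j) u = 0.
  by move=> jl; apply: J2; apply: sub_span; exists j.
case: eqP => [u0|/eqP un0].
  have Val : V l (a l) by have := J1 (a l); rewrite -/u u0 subr0.
  split; first by move=> y; apply: V_mono.
  split.
    move=> z y; apply: (V_ind (W := [set z | dotv z (S *m y) = 0])).
    - exact: kerdot_subsp.
    - by move=> t; apply: J2.
    - by rewrite /= (inv_sym _ _ I) -/u u0 dotvE big1 // => i _; rewrite mxE mul0r.
  split; first by apply: V_mono.
  move=> xs Hxs j; rewrite ltnS leq_eqVlt => /orP [/eqP ->|jl]; last exact: J4.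
  have := span_sub (kerdot_subsp (xs - x)) (S := [set v | exists j, (j < l)%N /\ v = a j]).
  by apply => // v [i [il ->]]; apply: J4.
set den := ((a l)^T *m u) 0 0.
have dE : den = dotv u u by rewrite /den -/(dotv _ _) (inv_sym _ _ I).
have dn0 : den != 0 by rewrite dE; apply/eqP => /dotv_eq0 /eqP; rewrite (negbTE un0).
have Sy y : (S - den^-1 *: (u *m ((ws l)^T *m A *m S))) *m y
            = S *m y - (den^-1 * dotv (a l) (S *m y)) *: u.
  by rewrite mulmxBl Hw -scalemxAl -mulmxA -(mulmxA (a l)^T) dotv_mx scalerA.
have au : dotv (a l) u = den by [].
split.
  move=> y /=; rewrite Sy opprB addrA addrAC.
  apply: subspD; [exact: span_subsp|exact: V_mono|].
  by apply: subspZ => //; exact: span_subsp.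
split.
  move=> z y Vz /=; rewrite Sy.
  apply: (V_ind (W := [set z | dotv z (S *m y - (den^-1 * dotv (a l) (S *m y)) *: u) = 0])) Vz.
  - exact: kerdot_subsp.
  - move=> t Vt /=; rewrite dotvBr dotvZr J2 // (J2 t (a l)) //.
    by rewrite mulr0 subr0.
  - by rewrite /= dotvBr dotvZr au mulrAC mulVf // mul1r subrr.
have Hx : den^-1 *: (u *m ((ws l)^T *m (b - A *m x))) = (den^-1 * ((ws l)^T *m (b - A *m x)) 0 0) *: u.
  by rewrite mx11_mulr scalerA.
split.
  rewrite /= Hx addrAC; apply: subspD; [exact: span_subsp|exact: V_mono|].
  by apply: subspZ => //; exact: span_subsp.
move=> xs Hxs j jl /=; rewrite Hx -Hxs -mulmxBr mulmxA Hw -/(dotv _ _).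
rewrite opprD addrA dotvBr dotvZr.
move: jl; rewrite ltnS leq_eqVlt => /orP [/eqP ->|jl].
  by rewrite au mulrAC mulVf // mul1r subrr.
by rewrite Sa // J4 // mulr0 subrr.
Qed.


Lemma inv_all l : inv l (kacz_iter A b x0 ws l).
Proof.
elim: l => [|l IH] /=; last by case: (kacz_iter _ _ _ _ l) IH => x S; apply: inv_step.
have V0 z : V 0 z -> z = 0.
  move=> [k [c [z' [Hz ->]]]]; apply: big1 => i _.
  by have [j [] //] := Hz i.
split; first by move=> y; rewrite mul1mx subrr; exact: (span_subsp _).1.
split; first by move=> z y /V0 ->; rewrite dotvE big1 // => i _; rewrite mxE mul0r.
by split => //; rewrite subrr; exact: (span_subsp _).1.
Qed.

Lemma step_id l : V l (a l) ->
  kacz_iter A b x0 ws l.+1 = kacz_iter A b x0 ws l.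
Proof.
move=> Va /=; have := inv_all l; case: (kacz_iter _ _ _ _ l) => x S I.
rewrite /kacz_step /= -mulmxA Ha (inv_kill I Va) eqxx //.
Qed.

End Inv.

Section Proj.
Variables (R : realType) (d : nat).

Lemma proj_ex (W : set 'cV[R]_d) k (z : nat -> 'cV[R]_d) : subsp W ->
  (forall j, (j < k)%N -> W (z j)) ->
  W `<=` span_set [set v | exists j, (j < k)%N /\ v = z j] ->
  forall x, exists y, W y /\ orth_compl W (x - y).
Proof.
move=> HW Wz WV x.
have Ha : forall j, (1%:M : 'M[R]_d)^T *m z j = z j by move=> j; rewrite trmx1 mul1mx.
have [J1 [J2 _]] := inv_all 0 0 Ha k.
set S := (kacz_iter _ _ _ _ _).2 in J1 J2.
have VW : V z k `<=` W.
  by apply: span_sub => // v [j [jk ->]]; apply: Wz.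
exists (x - S *m x); split; first by apply: VW.
by move=> t Wt; rewrite opprB addrC subrK; apply: J2; apply: WV.
Qed.

Lemma proj_uniq (W : set 'cV[R]_d) x y1 y2 : subsp W ->
  W y1 -> orth_compl W (x - y1) -> W y2 -> orth_compl W (x - y2) -> y1 = y2.
Proof.
move=> HW W1 O1 W2 O2; apply/eqP; rewrite -subr_eq0; apply/eqP; apply: dotv_eq0.
have We : W (y1 - y2) by apply: subspB.
rewrite {2}(_ : y1 - y2 = (x - y2) - (x - y1)); last by rewrite opprB [RHS]addrC addrA subrK.
by rewrite dotvBr O1 // O2 // subrr.
Qed.

Lemma orth_projE (W : set 'cV[R]_d) x y : subsp W -> W y -> orth_compl W (x - y) ->
  orth_proj W x = y.
Proof.
move=> HW Wy Oy; apply: xget_unique => // y' [Wy' Oy'].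
exact: (proj_uniq HW Wy' Oy' Wy Oy).
Qed.


Lemma max_vspace (W : set 'cV[R]_d) : subsp W ->
  exists U : {vspace 'cV[R]_d}, (forall v, v \in U -> W v) /\ (forall v, W v -> v \in U).
Proof.
move=> HW.
suff H : forall m (U : {vspace 'cV[R]_d}), (\dim (@fullv _ 'cV[R]_d) - \dim U <= m)%N ->
  (forall v, v \in U -> W v) ->
  exists U : {vspace 'cV[R]_d}, (forall v, v \in U -> W v) /\ (forall v, W v -> v \in U).
  apply: (H _ 0%VS (leqnn _)) => v; rewrite memv0 => /eqP ->; by case: HW.
have step : forall U : {vspace 'cV[R]_d}, (forall v, v \in U -> W v) ->
  (forall v, W v -> v \in U) \/ exists U' : {vspace 'cV[R]_d}, (forall v, v \in U' -> W v) /\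
     (\dim U < \dim U')%N /\ (\dim U' <= \dim (@fullv _ 'cV[R]_d))%N.
  move=> U UW.
  have [all|/existsNP [v /not_implyP [Wv vU]]] := pselect (forall v, W v -> v \in U); first by left.
  right; exists (U + <[v]>)%VS; split; last split.
  - move=> t /memv_addP [u Uu [w /vlineP [c ->] ->]].
    by rewrite addrC; apply: subspD => //; [apply: subspZ|apply: UW].
  - rewrite (ltn_leqif (dimv_leqif_sup (addvSl U <[v]>))).
    apply/negP => /subvP H0; apply: vU; apply: H0.
    by have := memv_add (mem0v U) (memv_line v); rewrite add0r.
  - by apply: dimvS; apply: subvf.
elim=> [|m IH] U Hm UW; (have [all|[U' [U'W [lt le]]]] := step U UW; first by exists U).
  by move: (\dim U) (\dim U') (\dim (@fullv _ 'cV[R]_d)) lt le Hm => p q D; lia.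
apply: (IH U') => //.
by move: (\dim U) (\dim U') (\dim (@fullv _ 'cV[R]_d)) lt le Hm => p q D; lia.
Qed.

Lemma fin_span (W : set 'cV[R]_d) : subsp W ->
  exists k (z : nat -> 'cV[R]_d), (forall j, (j < k)%N -> W (z j)) /\
    W `<=` span_set [set v | exists j, (j < k)%N /\ v = z j].
Proof.
move=> HW; have [U [UW WU]] := max_vspace HW.
exists (\dim U), (fun j => nth 0 (vbasis U) j); split.
  by move=> j jk; apply: UW; apply: vbasis_mem; apply: mem_nth; rewrite size_tuple.
move=> v /WU /coord_vbasis ->.
exists (\dim U), (fun i => coord (vbasis U) i v), (fun i => (vbasis U)`_i).
by split => // i; exists i.
Qed.

End Proj.

Lemma V_monoN (R : realType) d (a : nat -> 'cV[R]_d) i j : (i <= j)%N -> V a i `<=` V a j.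
Proof.
move=> ij; apply: span_sub; first exact: span_subsp.
by move=> v [k [ki ->]]; apply: sub_span; exists k; split => //; apply: leq_trans ij.
Qed.

Theorem mainTheorem5 (R : realType) (dsp : measure_display)
  (Omega : measurableType dsp) (P : probability Omega R)
  (n d : nat) (A : 'M[R]_(n, d)) (b : 'cV[R]_n)
  (w : Omega -> 'cV[R]_n) (ws : nat -> Omega -> 'cV[R]_n) (x0 : 'cV[R]_d) :
  (forall i : 'I_n, measurable_fun setT (fun om => w om i 0)) ->
  (forall (l : nat) (i : 'I_n), measurable_fun setT (fun om => ws l om i 0)) ->
  let Nw := span_set [set z : 'cV[R]_d |
              {ae P, forall om, (z^T *m A^T *m w om) 0 0 = 0}] in
  let Rw := orth_compl Nw in
  (forall l : nat, {ae P, forall om, Rw (A^T *m ws l om)}) ->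
  let spanW (om : Omega) (k : nat) :=
    span_set [set v | exists j : nat, (j <= k)%N /\ v = A^T *m ws j om] in
  let isT (om : Omega) (k : nat) :=
    Rw `<=` spanW om k /\ (forall j : nat, (j < k)%N -> ~ (Rw `<=` spanW om j)) in
  let it (om : Omega) := kacz_iter A b x0 (fun l => ws l om) in
  {ae P, forall om, forall T : nat, isT om T ->
     (forall s : nat, (T.+1 <= s)%N ->
        (it om T.+1).2 = (it om s).2 /\ (it om T.+1).1 = (it om s).1) /\
     ((exists xs : 'cV[R]_d, A *m xs = b) ->
        forall xstar : 'cV[R]_d, A *m xstar = b ->
          (it om T.+1).1 = orth_proj Nw x0 + orth_proj Rw xstar)}.
Proof.
move=> _ _ Nw Rw HR spanW isT it.
have HRall := ae_foralln HR.
apply: filterS HRall => om HRom T [HT1 _].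
pose a := fun j => A^T *m ws j om.
have Ha : forall j, A^T *m (fun l => ws l om) j = a j by [].
have sN : subsp Nw by apply: span_subsp.
have sR : subsp Rw by apply: orth_subsp.
have VR l : V a l `<=` Rw.
  by apply: span_sub => // v [j [_ ->]]; apply: HRom.
have RV : Rw `<=` V a T.+1.
  move=> v /HT1; apply: span_sub; first exact: span_subsp.
  by move=> t [j [jT ->]]; apply: sub_span; exists j; split.
have stab k : it om (T.+1 + k)%N = it om T.+1.
  elim: k => [|k IH]; first by rewrite addn0.
  rewrite addnS /it (step_id _ _ Ha) //; apply: (V_monoN (leq_addr k T.+1)); apply: RV; exact: HRom.
split.
  by move=> s Ts; rewrite -(subnKC Ts) stab.
move=> _ xstar Hxs.
have [J1 [J2 [J3 J4]]] := inv_all b x0 Ha T.+1.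
rewrite -/(it om T.+1) in J1 J2 J3 J4.
set x := (it om T.+1).1 in J3 J4 *.
have [q [Rq Oq]] := proj_ex sR (k := T.+1) (z := a) (fun j _ => HRom j) RV xstar.
have [k [z [zN Nz]]] := fin_span sN.
have [p [Np Op]] := proj_ex sN zN Nz x0.
rewrite (orth_projE sR Rq Oq) (orth_projE sN Np Op).
apply/eqP; rewrite -subr_eq0; apply/eqP; apply: dotv_eq0.
have Re : Rw (x - (p + q)).
  rewrite (_ : x - (p + q) = (x - x0) + (x0 - p) - q); last by rewrite addrA subrK -addrA -opprD.
  apply: (subspB sR) => //; apply: (subspD sR) => //; exact: (VR T.+1).
have Oe : orth_compl Rw (x - (p + q)).
  have sO : subsp (orth_compl Rw) by apply: orth_subsp.
  rewrite (_ : x - (p + q) = - (xstar - x) + (xstar - q) - p); last first.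
    by rewrite opprB addrA subrK -addrA -opprD [q + p]addrC.
  apply: (subspB sO) => //; first apply: (subspD sO) => //.
  - rewrite -scaleN1r; apply: (subspZ _ sO) => // t /RV.
    apply: (span_sub (kerdot_subsp _)) => //=.
    by move=> v [j [jT ->]] /=; apply: J4.
  - by move=> t Rt; rewrite dotvC; apply: Rt.
by apply: Oe.
Qed.
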